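(* Let $d=1$. Then $\Pi^{0}=\mathbb{Q}$. That is, a real number $x$ has the property that for every non-increasing $\psi:\mathbb{N}\to\mathbb{R}_{\ge0}$ with $\sum_n\psi(n)=\infty$ there are infinitely many $n\in\mathbb{N}$ with $\|nx\|<\psi(n)$, if and only if $x\in\mathbb{Q}$.
   Context: For $t\in\mathbb{R}$, $\|t\|$ is the distance from $t$ to $\mathbb{Z}$. Write $\mathbb{N}=\{1,2,\dots\}$. $\Pi^0=\{x\in\mathbb{R}:(x,0)\in\Pi\}$, where $\Pi$ is the set of $(x,y)\in\mathbb{R}^2$ such that for every non-increasing $\psi:\mathbb{N}\to\mathbb{R}_{\ge0}$ with $\sum_n\psi(n)=\infty$, one has $\|nx+y\|<\psi(n)$ for infinitely many $n\in\mathbb{N}$. *)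

(* Defs.v *)
From Stdlib Require Import Reals Lra Lia ZArith.
Open Scope R_scope.

Definition distZ (t : R) : R :=
  Rmin (t - IZR (Int_part t)) (IZR (Int_part t) + 1 - t).

(* psi : N -> R_{>=0}; we model N = {1,2,...} by using psi on positive nat,
   psi n meaningful for n >= 1 (value at 0 is ignored). *)
Definition nonincreasing_pos (psi : nat -> R) : Prop :=
  forall m n : nat, (1 <= m)%nat -> (m <= n)%nat -> psi n <= psi m.

Definition nonneg_pos (psi : nat -> R) : Prop :=
  forall n : nat, (1 <= n)%nat -> 0 <= psi n.

Definition sum_diverges (psi : nat -> R) : Prop :=
  cv_infty (fun N => sum_f_R0 (fun k => psi (S k)) N).

Definition infinitely_many (P : nat -> Prop) : Prop :=
  forall N : nat, exists n : nat, (N <= n)%nat /\ (1 <= n)%nat /\ P n.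

Definition in_Pi (x y : R) : Prop :=
  forall psi : nat -> R,
    nonneg_pos psi -> nonincreasing_pos psi -> sum_diverges psi ->
    infinitely_many (fun n => distZ (INR n * x + y) < psi n).

Definition in_Pi0 (x : R) : Prop := in_Pi x 0.

Definition is_rational (x : R) : Prop :=
  exists (p q : Z), q <> 0%Z /\ x = IZR p / IZR q.

(* Main.v *)
Require Import Defs.
From Stdlib Require Import Reals Lra Lia ZArith Classical.
Open Scope R_scope.

Lemma distZ_int t : exists p : Z, distZ t = Rabs (t - IZR p).
Proof.
  destruct (base_Int_part t) as [H1 H2]. unfold distZ.
  apply Rmin_case.
  - exists (Int_part t). rewrite Rabs_right; lra.
  - exists (Int_part t + 1)%Z. rewrite plus_IZR. rewrite Rabs_left1; lra.
Qed.

Lemma distZ_ge0 t : 0 <= distZ t.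
Proof. destruct (distZ_int t) as [p ->]. apply Rabs_pos. Qed.

Lemma distZ_IZR z : distZ (IZR z) = 0.
Proof.
  unfold distZ. rewrite <- (Int_part_spec (IZR z) z) by lra.
  unfold Rmin; destruct Rle_dec; lra.
Qed.

Lemma distZ_zero t : distZ t = 0 -> exists z, t = IZR z.
Proof.
  destruct (distZ_int t) as [p ->]. intro H. exists p.
  destruct (Req_dec (t - IZR p) 0) as [h|h]; [lra|exfalso; exact (Rabs_no_R0 _ h H)].
Qed.

Lemma Z_alt (z : Z) : IZR z = 0 \/ 1 <= Rabs (IZR z).
Proof.
  destruct (Z.eq_dec z 0) as [->|Hz]; [left; reflexivity|right].
  destruct (Z_lt_le_dec z 0).
  - assert (IZR z <= -1) by (apply IZR_le; lia). rewrite Rabs_left1; lra.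
  - assert (1 <= IZR z) by (apply IZR_le; lia). rewrite Rabs_right; lra.
Qed.

Lemma key_R (A B x Pa Pb : R) :
  0 < A -> A <= B ->
  (A * Pb - B * Pa = 0 \/ 1 <= Rabs (A * Pb - B * Pa)) ->
  Rabs (B * x - Pb) < Rabs (A * x - Pa) ->
  1 < 2 * B * Rabs (A * x - Pa).
Proof.
  intros HA HAB Hz Hlt.
  assert (E : A * Pb - B * Pa = B * (A * x - Pa) + (- A) * (B * x - Pb)) by ring.
  destruct Hz as [Hz|Hz].
  - exfalso.
    assert (E2 : B * (A * x - Pa) = A * (B * x - Pb)) by lra.
    assert (E3 : Rabs (B * (A * x - Pa)) = Rabs (A * (B * x - Pb))) by (rewrite E2; reflexivity).
    rewrite !Rabs_mult, !Rabs_right in E3 by lra.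
    assert (0 <= Rabs (B * x - Pb)) by apply Rabs_pos.
    assert (A * Rabs (B * x - Pb) < A * Rabs (A * x - Pa)) by (apply Rmult_lt_compat_l; lra).
    assert (A * Rabs (A * x - Pa) <= B * Rabs (A * x - Pa)) by (apply Rmult_le_compat_r; [apply Rabs_pos|lra]).
    rewrite (Rabs_right A) in E3 by lra. lra.
  - rewrite E in Hz.
    pose proof (Rabs_triang (B * (A * x - Pa)) (- A * (B * x - Pb))) as T.
    rewrite !Rabs_mult, (Rabs_right B), (Rabs_left (- A)) in T by lra.
    assert (0 <= Rabs (B * x - Pb)) by apply Rabs_pos.
    assert (A * Rabs (B * x - Pb) < B * Rabs (A * x - Pa)) by (apply Rle_lt_trans with (B * Rabs (B * x - Pb)); [apply Rmult_le_compat_r; lra | apply Rmult_lt_compat_l; lra]).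
    lra.
Qed.

Lemma key (a b : nat) (x : R) :
  (1 <= a)%nat -> (a <= b)%nat ->
  distZ (INR b * x) < distZ (INR a * x) ->
  1 < 2 * INR b * distZ (INR a * x).
Proof.
  intros Ha Hab Hlt.
  destruct (distZ_int (INR a * x)) as [pa Ea].
  destruct (distZ_int (INR b * x)) as [pb Eb].
  rewrite Ea, Eb in *.
  apply key_R with (Pb := IZR pb); auto.
  - apply lt_0_INR; lia.
  - apply le_INR; lia.
  - rewrite !INR_IZR_INZ, <- !mult_IZR, <- minus_IZR. apply Z_alt.
Qed.
Fixpoint mind (x : R) (n : nat) : R :=
  match n with
  | O => distZ (INR 1 * x)
  | S m => Rmin (mind x m) (distZ (INR (S m) * x))
  end.

Lemma mind_le x n m : (1 <= m <= n)%nat -> mind x n <= distZ (INR m * x).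
Proof.
  induction n as [|n IH]; intros Hm; [lia|].
  simpl mind. destruct (Nat.eq_dec m (S n)) as [->|Hne].
  - apply Rmin_r.
  - eapply Rle_trans; [apply Rmin_l|]. apply IH; lia.
Qed.

Lemma mind_ach x n : exists a, (1 <= a)%nat /\ (a <= Nat.max 1 n)%nat /\ mind x n = distZ (INR a * x).
Proof.
  induction n as [|n IH].
  - exists 1%nat. simpl. repeat split; auto.
  - simpl mind. apply Rmin_case.
    + destruct IH as [a [H1 [H2 H3]]]. exists a. repeat split; auto. lia.
    + exists (S n). repeat split; lia.
Qed.

Lemma mind_ge0 x n : 0 <= mind x n.
Proof. destruct (mind_ach x n) as [a [_ [_ ->]]]. apply distZ_ge0. Qed.

Lemma mind_noninc x : nonincreasing_pos (mind x).
Proof.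
  intros m n _ Hmn. induction Hmn; [lra|].
  eapply Rle_trans; [|exact IHHmn]. simpl. apply Rmin_l.
Qed.

Lemma dist_pos_irr x m : ~ is_rational x -> (1 <= m)%nat -> 0 < distZ (INR m * x).
Proof.
  intros Hx Hm. destruct (Rle_lt_or_eq_dec 0 _ (distZ_ge0 (INR m * x))) as [h|h]; auto.
  exfalso. apply Hx. destruct (distZ_zero _ (eq_sym h)) as [z Hz].
  exists z, (Z.of_nat m). split; [lia|].
  rewrite <- INR_IZR_INZ, <- Hz. field. apply not_0_INR; lia.
Qed.

Lemma mind_pos x n : ~ is_rational x -> 0 < mind x n.
Proof.
  intros Hx. destruct (mind_ach x n) as [a [H1 [_ ->]]]. apply dist_pos_irr; auto.
Qed.

Lemma mind_K x n L : (1 <= n)%nat -> (n <= L)%nat -> 2 * INR L * mind x n <= 1 ->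
  mind x n <= mind x L.
Proof.
  intros Hn HnL H2.
  destruct (mind_ach x L) as [a' [Ha1 [Ha2 Ea']]].
  rewrite Ea'.
  destruct (le_lt_dec a' n) as [Hle|Hgt].
  - apply mind_le; lia.
  - destruct (mind_ach x n) as [a [Hb1 [Hb2 Ea]]].
    destruct (Rlt_or_le (distZ (INR a' * x)) (mind x n)) as [Hlt|Hge]; auto.
    exfalso. rewrite Ea in Hlt, H2.
    pose proof (key a a' x Hb1 ltac:(lia) Hlt) as K.
    assert (INR a' <= INR L) by (apply le_INR; lia).
    pose proof (distZ_ge0 (INR a * x)). nra.
Qed.

Definition PS (psi : nat -> R) (N : nat) : R := sum_f_R0 (fun k => psi (S k)) N.

Lemma PS_step psi N d : nonincreasing_pos psi ->
  PS psi (N + d) - PS psi N >= INR d * psi (N + d + 1)%nat.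
Proof.
  intros Hm. induction d as [|d IH].
  - rewrite Nat.add_0_r. simpl. lra.
  - rewrite Nat.add_succ_r. unfold PS in *. simpl sum_f_R0.
    rewrite S_INR.
    assert (psi (S (S (N + d))) <= psi (N + d + 1)%nat) by (apply Hm; lia).
    assert (INR d * psi (S (S (N + d))) <= INR d * psi (N + d + 1)%nat)
      by (apply Rmult_le_compat_l; [apply pos_INR|auto]).
    replace (S (N + d) + 1)%nat with (S (S (N + d))) by lia.
    lra.
Qed.

Lemma PS_mono psi N n : nonneg_pos psi -> nonincreasing_pos psi -> (N <= n)%nat ->
  PS psi N <= PS psi n.
Proof.
  intros Hp Hm Hn. replace n with (N + (n - N))%nat by lia.
  pose proof (PS_step psi N (n - N) Hm).
  assert (0 <= INR (n - N) * psi (N + (n - N) + 1)%nat)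
    by (apply Rmult_le_pos; [apply pos_INR|apply Hp; lia]).
  lra.
Qed.
Lemma growth x N : ~ is_rational x ->
  exists N', (N <= N')%nat /\ PS (mind x) N + 1/8 <= PS (mind x) N'.
Proof.
  intros Hx.
  set (n := S N).
  set (d := mind x (2 * n)).
  assert (Hd : 0 < d) by apply mind_pos, Hx.
  assert (Hn1 : 1 <= INR n) by (apply (le_INR 1); unfold n; lia).
  destruct (Rlt_or_le 1 (8 * INR n * d)) as [HA|HB].
  - exists (N + n)%nat. split; [lia|].
    pose proof (PS_step (mind x) N n (mind_noninc x)) as P.
    replace (N + n + 1)%nat with (2 * n)%nat in P by (unfold n; lia).
    fold d in P. lra.
  - set (e := / (8 * d)).
    assert (He : 8 * d * e = 1) by (unfold e; field; lra).
    assert (He0 : 0 < e) by (unfold e; apply Rinv_0_lt_compat; lra).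
    assert (Hne : INR n <= e) by nra.
    destruct (archimed (INR n + e)) as [U1 U2].
    assert (Hup : (0 <= up (INR n + e))%Z) by (apply le_IZR; lra).
    set (L := Z.to_nat (up (INR n + e))).
    assert (HL : INR L = IZR (up (INR n + e)))
      by (unfold L; rewrite INR_IZR_INZ, Z2Nat.id; auto).
    assert (HL2n : (2 * n < L)%nat).
    { apply INR_lt. rewrite mult_INR. simpl (INR 2). lra. }
    assert (Hd8 : d <= 1/8).
    { assert (8 * d <= 8 * INR n * d) by nra. lra. }
    assert (HLd : 2 * INR L * d <= 1).
    { assert (INR L <= INR n + e + 1) by lra.
      assert (INR L * d <= (INR n + e + 1) * d) by (apply Rmult_le_compat_r; lra).
      nra. }
    assert (HK : d <= mind x L).
    { apply mind_K; [unfold n in *; lia|lia|exact HLd]. }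
    exists (L - 1)%nat. split; [unfold n in *; lia|].
    pose proof (PS_step (mind x) N (L - 1 - N) (mind_noninc x)) as P.
    replace (N + (L - 1 - N))%nat with (L - 1)%nat in P by (unfold n in *; lia).
    replace (L - 1 + 1)%nat with L in P by (unfold n in *; lia).
    assert (Hi : INR (L - 1 - N) = INR L - INR n).
    { rewrite !minus_INR by (unfold n in *; lia). unfold n. rewrite (S_INR N). change (INR 1) with 1. lra. }
    rewrite Hi in P.
    assert (0 <= INR L - INR n) by lra.
    assert ((INR L - INR n) * d <= (INR L - INR n) * mind x L) by (apply Rmult_le_compat_l; lra).
    assert (e * d < (INR L - INR n) * d) by (apply Rmult_lt_compat_r; lra).
    lra.
Qed.

Lemma mind_div x : ~ is_rational x -> sum_diverges (mind x).
Proof.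
  intros Hx.
  assert (It : forall k : nat, exists N, PS (mind x) 0 + INR k / 8 <= PS (mind x) N).
  { induction k as [|k [N HN]].
    - exists 0%nat. simpl. lra.
    - destruct (growth x N Hx) as [N' [_ HN']]. exists N'. rewrite S_INR. lra. }
  intros M. 
  destruct (archimed (8 * (M - PS (mind x) 0))) as [U1 _].
  destruct (It (Z.to_nat (up (8 * (M - PS (mind x) 0))))) as [N HN].
  exists (S N). intros m Hm.
  assert (HI : 8 * (M - PS (mind x) 0) < INR (Z.to_nat (up (8 * (M - PS (mind x) 0))))).
  { destruct (Z_le_gt_dec 0 (up (8 * (M - PS (mind x) 0)))) as [h|h].
    - rewrite INR_IZR_INZ, Z2Nat.id; auto.
    - apply Rlt_le_trans with (IZR (up (8 * (M - PS (mind x) 0)))); auto.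
      apply Rle_trans with 0; [apply IZR_le; lia| apply pos_INR]. }
  pose proof (PS_mono (mind x) N (S N) (fun n _ => mind_ge0 x n) (mind_noninc x) ltac:(lia)).
  pose proof (PS_mono (mind x) (S N) m (fun n _ => mind_ge0 x n) (mind_noninc x) Hm).
  assert (PS (mind x) N < PS (mind x) (S N) \/ PS (mind x) N <= PS (mind x) (S N)) by lra.
  unfold PS in *. lra.
Qed.
Lemma psi_pos psi n : nonneg_pos psi -> nonincreasing_pos psi -> sum_diverges psi ->
  (1 <= n)%nat -> 0 < psi n.
Proof.
  intros Hp Hm Hd Hn.
  destruct (Rlt_or_le 0 (psi n)) as [h|h]; auto. exfalso.
  destruct (Hd (PS psi n)) as [N0 HN0].
  set (m := Nat.max N0 n).
  specialize (HN0 m ltac:(unfold m; lia)).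
  pose proof (PS_step psi n (m - n) Hm) as P.
  replace (n + (m - n))%nat with m in P by (unfold m; lia).
  assert (psi (m + 1)%nat <= psi n) by (apply Hm; lia).
  assert (0 <= psi (m + 1)%nat) by (apply Hp; lia).
  assert (psi (m + 1)%nat = 0) by lra.
  assert (Hz : forall k, (n <= k)%nat -> PS psi k <= PS psi n).
  { intros k Hk. induction Hk; [lra|]. unfold PS in *. simpl sum_f_R0.
    assert (psi (S (S m0)) <= psi n) by (apply Hm; lia). lra. }
  specialize (Hz m ltac:(unfold m; lia)). unfold PS in *. lra.
Qed.

Theorem lemma23 : forall x : R, in_Pi0 x <-> is_rational x.
Proof.
  intros x. split.
  - intros H. destruct (classic (is_rational x)) as [h|h]; auto. exfalso.
    destruct (H (mind x) (fun n _ => mind_ge0 x n) (mind_noninc x) (mind_div x h) 1%nat)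
      as [n [_ [Hn Hlt]]].
    rewrite Rplus_0_r in Hlt.
    pose proof (mind_le x n n ltac:(lia)). lra.
  - intros [p [q [Hq Hx]]] psi Hp Hm Hd N.
    set (n := (Z.to_nat (Z.abs q) * S N)%nat).
    assert (Hq1 : (1 <= Z.to_nat (Z.abs q))%nat) by lia.
    exists n. split; [unfold n; nia|]. split; [unfold n; nia|].
    assert (E : INR n * x + 0 = IZR (Z.sgn q * p * Z.of_nat (S N))).
    { rewrite INR_IZR_INZ. unfold n. rewrite Nat2Z.inj_mul, Z2Nat.id by lia.
      rewrite <- Z.sgn_abs, Hx, !mult_IZR. field. apply not_0_IZR; auto. }
    rewrite E, distZ_IZR. apply psi_pos; auto. unfold n; nia.
Qed.
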